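(* Let $n\ge 1$, $t\ge 0$, $\ell\ge 1$ be integers with $n\ge 3t+1$. The adapted COOL protocol described in the context solves Byzantine broadcast on $\ell$-bit messages error-free: in every execution, against every adversary (of unbounded computational power, with no cryptographic assumptions) controlling at most $t$ processors (possibly including the leader), it satisfies termination, consistency and broadcast validity. Moreover it uses $O(t)$ rounds and a total of $O(\max\{n\ell,\ nt\log t\})$ communicated bits.
   Context: Setting. There are $n$ processors indexed by $[1:n]$; every two are joined by a reliable private channel, communication is synchronous (in rounds), and each recipient knows the sender of every message. At most $t$ processors are dishonest, controlled by a Byzantine adversary of unbounded computational power that knows everything and may make them deviate arbitrarily (missing values are replaced by a fixed default). One designated processor, the leader, holds an $\ell$-bit message $\boldsymbol M$. $\phi$ denotes a default value different from every $\ell$-bit message. Logarithms are base 2. Byzantine broadcast requirements: termination (every honest processor eventually outputs a message and terminates), consistency (all honest processors output the same message), validity (if the leader is honest, every honest processor outputs $\boldsymbol M$). Error-free means these hold in every execution. Adapted COOL: in a first round the leader sends an $\ell$-bit message to every processor (an honest leader sends $\boldsymbol M$); each processor $i$ takes the message received (a fixed default if none) as its initial message $\boldsymbol w_i$; then all processors run COOL, described next. Code. Let $k=\lfloor t/5\rfloor+1$ and $c=\lceil \max\{\ell,(t/5+1)\log(n+1)\}/k\rceil$ (so $n\le 2^c-1$). Messages are zero-padded to $kc$ bits and regarded as vectors in $GF(2^c)^k$. Integers in $[1:n]$ are identified with distinct nonzero elements of $GF(2^c)$, and $\boldsymbol h_i\in GF(2^c)^k$ has entries $h_{i,j}=\prod_{p\in[1:k],\,p\ne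 j}\frac{i-p}{j-p}$ computed in $GF(2^c)$. Core protocol (all $n$ processors; honest processor $i$). Initialization: $\boldsymbol w^{(i)}:=\boldsymbol w_i$, $y^{(i)}_j:=\boldsymbol h_j^{\mathsf T}\boldsymbol w_i$, $u_i(i):=1$. Phase 1. (a) Send $(y^{(i)}_j,y^{(i)}_i)$ to each $j\ne i$. (b) For $j\ne i$, $u_i(j):=1$ if the pair received from $j$ equals $(y^{(i)}_i,y^{(i)}_j)$, else $0$. Set $s_i:=1$ if $\sum_j u_i(j)\ge n-t$; otherwise $s_i:=0$ and $\boldsymbol w^{(i)}:=\phi$. (c) Send $s_i$ to all; each processor records the indicator received from each $j$ (its own for itself) and forms $\mathcal S_1=\{j:s_j=1\}$, $\mathcal S_0=\{j:s_j=0\}$. Phase 2. If $s_i=1$: set $u_i(j):=0$ for $j\in\mathcal S_0$; if now $\sum_j u_i(j)<n-t$, set $s_i:=0$, $\boldsymbol w^{(i)}:=\phi$, send $s_i=0$ to all. Everyone updates recorded indicators and $\mathcal S_0,\mathcal S_1$. Phase 3. Repeat Phase 2 once more. Vote $v_i:=1$ if recorded $\sum_j s_j\ge 2t+1$, else $0$. Run on the votes a deterministic error-free binary Byzantine agreement protocol for $t<n/3$ with $O(nt)$ bits and $O(t)$ rounds (e.g. Berman–Garay–Perry or Coan–Welch). If the decision is $0$, output $\phi$ and stop. Phase 4 (decision 1). If $s_i=0$: replace $y^{(i)}_i$ by the most frequent first component of the Phase-1 pairs received from $j\in\mathcal S_1$; send it to every $j\in\mathcal S_0\setminus\{i\}$;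 with $z_i=y^{(i)}_i$, $z_j$ the value received in Phase 4 for $j\in\mathcal S_0\setminus\{i\}$, $z_j$ the second component of the Phase-1 pair for $j\in\mathcal S_1$, set $\boldsymbol w^{(i)}$ to a message $\boldsymbol x$ with $\boldsymbol h_j^{\mathsf T}\boldsymbol x=z_j$ for at least $n-t$ indices ($\phi$ if none). If $s_i=1$, keep $\boldsymbol w^{(i)}$. Output $\boldsymbol w^{(i)}$. COOL in general: if $n\le Ct$ for a fixed constant $C$, COOL is the core protocol; otherwise the processors of $Q=[1:3t+1]$ run the core protocol among themselves (with $n$ replaced by $n'=3t+1$), then each $i\in Q$ sends $\boldsymbol h_i^{\mathsf T}\boldsymbol w^{(i)}$ of its output (a marker if $\phi$) to every processor outside $Q$, which outputs the message consistent with the values of at least $n'-t$ processors of $Q$ (or $\phi$ on at least $n'-t$ markers). *)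

(* Defs.v *)
From mathcomp Require Import all_boot all_order all_algebra.
Import GRing.Theory.
Local Open Scope ring_scope.

Definition msg (l : nat) := (l.-tuple bool)%type.

(* c = ceil(max{l, (t/5+1) log2(n+1)} / k), k = floor(t/5)+1, computed exactly:
   the least c with  k*c >= l  and  k*c >= (t/5+1) log2(n+1),
   the latter being equivalent to 2^(5kc) >= (n+1)^(t+5).  The search bound
   l + (t+5)(n+1) always contains a solution. *)
Definition kpar (t : nat) : nat := (t %/ 5 + 1)%N.
Definition cval (n t l : nat) : nat :=
  find (fun c => (l <= kpar t * c) && ((n.+1) ^ (t + 5) <= 2 ^ (5 * kpar t * c)))%N
       (iota 0 (l + (t + 5) * n.+1).+1).

(* Messages sent by dishonest processors in the core protocol.
   Convention: [aX A j i] is what (dishonest) sender j sends to receiver i. *)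
Record CoreAdv (F : Type) (P : finType) := {
  a1  : P -> P -> (F * F)%type;
  a1c : P -> P -> bool;
  a2  : P -> P -> bool;            (* Phase 2: true = sends "s = 0" *)
  a3  : P -> P -> bool;            (* Phase 3: true = sends "s = 0" *)
  a4  : P -> P -> F
}.

Arguments a1 {F P}. Arguments a1c {F P}. Arguments a2 {F P}. Arguments a3 {F P}. Arguments a4 {F P}.

Section Core.
(* F = GF(2^c); k = dimension; P = participating processors, [num i] its
   0-based index (paper index num i + 1), identified with field element
   alpha (num i); p in [1:k] is identified with alpha (p-1). *)
Variables (F : finFieldType) (k l t : nat) (P : finType) (num : P -> nat)
  (alpha : nat -> F) (enc : msg l -> 'rV[F]_k) (B : {set P}).

Definition hcoef (i : nat) (j : 'I_k) : F :=
  \prod_(p < k | p != j) ((alpha i - alpha p) / (alpha j - alpha p)).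

Definition ev (i : P) (x : msg l) : F := \sum_(j < k) hcoef (num i) j * enc x 0 j.

Variables (w0 : P -> msg l) (A : CoreAdv F P).

Definition yv (i j : P) : F := ev j (w0 i).
Definition recv1 (i j : P) : (F * F)%type :=
  if j \in B then a1 A j i else (yv j i, yv j j).
Definition u1 (i j : P) : bool := (j == i) || (recv1 i j == (yv i i, yv i j)).
Definition s1 (i : P) : bool := (#|P| - t <= #|[set j | u1 i j]|)%N.
Definition rec1 (i j : P) : bool :=
  if j == i then s1 i else if j \in B then a1c A j i else s1 j.
Definition u2 (i j : P) : bool := u1 i j && rec1 i j.
Definition s2 (i : P) : bool := s1 i && (#|P| - t <= #|[set j | u2 i j]|)%N.
Definition notif2 (j i : P) : bool := if j \in B then a2 A j i else s1 j && ~~ s2 j.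
Definition rec2 (i j : P) : bool := if j == i then s2 i else rec1 i j && ~~ notif2 j i.
Definition u3 (i j : P) : bool := u2 i j && rec2 i j.
Definition s3 (i : P) : bool := s2 i && (#|P| - t <= #|[set j | u3 i j]|)%N.
Definition notif3 (j i : P) : bool := if j \in B then a3 A j i else s2 j && ~~ s3 j.
Definition rec3 (i j : P) : bool := if j == i then s3 i else rec2 i j && ~~ notif3 j i.
Definition vote (i : P) : bool := (2 * t + 1 <= #|[set j | rec3 i j]|)%N.

(* the binary BA on the votes: any outcome d satisfying (agreement, built in
   since d is a single value, and) validity *)
Definition ba_ok (d : bool) : Prop :=
  forall b : bool, (forall i, i \notin B -> vote i = b) -> d = b.

Definition freq (i : P) (v : F) : nat := #|[set j | rec3 i j && ((recv1 i j).1 == v)]|.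
Definition fix4 (i : P) : F := odflt 0 [pick v | [forall v', (freq i v' <= freq i v)%N]].
Definition recv4 (i j : P) : F := if j \in B then a4 A j i else fix4 j.
Definition z4 (i j : P) : F :=
  if j == i then fix4 i else if rec3 i j then (recv1 i j).2 else recv4 i j.
Definition decode4 (i : P) : option (msg l) :=
  [pick x : msg l | (#|P| - t <= #|[set j | ev j x == z4 i j]|)%N].

Variable d : bool.
(* output of (honest) processor i; None = phi *)
Definition core_out (i : P) : option (msg l) :=
  if d then (if s3 i then Some (w0 i) else decode4 i) else None.

(* bits sent by honest processors (field elements cost c bits, indicators 1
   bit), plus [bab] bits for the BA sub-protocol *)
Definition core_bits (c bab : nat) : nat :=
  (\sum_(i in P | i \notin B)
     ((#|P| - 1) * (2 * c) + (#|P| - 1)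
      + (if s1 i && ~~ s2 i then #|P| - 1 else 0)
      + (if s2 i && ~~ s3 i then #|P| - 1 else 0)
      + (if d && ~~ s3 i then c * #|[set j | ~~ rec3 i j & j != i]| else 0)) + bab)%N.
End Core.

(* Subcommittee Q = [1:3t+1] (0-based: indices < 3t+1) *)
Definition Qt (n t : nat) : finType := {i : 'I_n | (i < 3 * t + 1)%N}.

(* number of participants of the core protocol, and the field exponent *)
Definition cool_m (n t C : nat) : nat := if (n <= C * t)%N then n else (3 * t + 1)%N.
Definition cool_c (n t l C : nat) : nat := cval (cool_m n t C) t l.

Record CoolAdv (F : Type) (n t l : nat) := {
  a0   : 'I_n -> msg l;                 (* leader's first-round message, if leader dishonest *)
  advN : CoreAdv F 'I_n;                 (* core among all processors (n <= C t) *)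
  advQ : CoreAdv F (Qt n t);             (* core among Q (n > C t) *)
  a5   : Qt n t -> 'I_n -> option F      (* value (None = marker) from q in Q to outsider *)
}.

Arguments a0 {F n t l}. Arguments advN {F n t l}. Arguments advQ {F n t l}. Arguments a5 {F n t l}.

Section Cool.
Variables (n t l C : nat) (L : 'I_n) (M : msg l) (B : {set 'I_n})
  (F : finFieldType) (alpha : nat -> F) (enc : msg l -> 'rV[F]_(kpar t))
  (adv : CoolAdv F n t l).

Definition w0 (i : 'I_n) : msg l := if L \in B then a0 adv i else M.

Definition BQ : {set Qt n t} := [set q | val q \in B].
Definition w0Q (q : Qt n t) : msg l := w0 (val q).
Definition numQ (q : Qt n t) : nat := val (val q).

Definition cool_ba_ok (d : bool) : Prop :=
  if (n <= C * t)%N then @ba_ok F (kpar t) l t 'I_n (fun i : 'I_n => nat_of_ord i) alpha enc B w0 (advN adv) d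
  else @ba_ok F (kpar t) l t (Qt n t) numQ alpha enc BQ w0Q (advQ adv) d.

Variable d : bool.

Definition coreQ_out : Qt n t -> option (msg l) :=
  @core_out F (kpar t) l t (Qt n t) numQ alpha enc BQ w0Q (advQ adv) d.

Definition outsider_out (i : 'I_n) : option (msg l) :=
  let recv q := if val q \in B then a5 adv q i
                else omap (@ev F (kpar t) l (Qt n t) numQ alpha enc q) (coreQ_out q) in
  [pick x : msg l | (#|Qt n t| - t <= #|[set q | recv q == Some (@ev F (kpar t) l (Qt n t) numQ alpha enc q x)]|)%N].

Definition cool_out (i : 'I_n) : option (msg l) :=
  if (n <= C * t)%N then @core_out F (kpar t) l t 'I_n (fun i : 'I_n => nat_of_ord i) alpha enc B w0 (advN adv) d i
  else match insub i with
       | Some q => coreQ_out q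
       | None => outsider_out i
       end.

Variables (baRounds baBits : nat -> nat -> nat).

(* rounds: leader round, Phase 1 (2 rounds), Phase 2, Phase 3, BA, Phase 4,
   and (subcommittee variant) the final dissemination round *)
Definition cool_rounds : nat :=
  if (n <= C * t)%N then (6 + baRounds n t)%N else (7 + baRounds (3 * t + 1) t)%N.

Definition cool_bits : nat :=
  ((if L \in B then 0 else l * (n - 1))
   + if (n <= C * t)%N then
       @core_bits F (kpar t) l t 'I_n (fun i : 'I_n => nat_of_ord i) alpha enc B w0 (advN adv) d
         (cool_c n t l C) (baBits n t)
     else
       @core_bits F (kpar t) l t (Qt n t) numQ alpha enc BQ w0Q (advQ adv) d (cool_c n t l C) (baBits (3 * t + 1) t)
       + \sum_(q in Qt n t | val q \notin B) (cool_c n t l C + 1) * (n - (3 * t + 1)))%N.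
End Cool.

(* Main.v *)
Require Import Defs.
From mathcomp Require Import all_boot all_order all_algebra.
From mathcomp Require Import zify.

Section CoreProof.
Variables (F : finFieldType) (k l t : nat) (P : finType) (num : P -> nat)
  (alpha : nat -> F) (enc : msg l -> 'rV[F]_k) (B : {set P}) (w0 : P -> msg l)
  (A : CoreAdv F P) (d : bool).

Local Notation ev := (ev F k l P num alpha enc).
Local Notation yv := (yv F k l P num alpha enc w0).
Local Notation recv1 := (recv1 F k l P num alpha enc B w0 A).
Local Notation u1 := (u1 F k l P num alpha enc B w0 A).
Local Notation s1 := (s1 F k l t P num alpha enc B w0 A).
Local Notation rec1 := (rec1 F k l t P num alpha enc B w0 A).
Local Notation u2 := (u2 F k l t P num alpha enc B w0 A).
Local Notation s2 := (s2 F k l t P num alpha enc B w0 A).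
Local Notation rec2 := (rec2 F k l t P num alpha enc B w0 A).
Local Notation u3 := (u3 F k l t P num alpha enc B w0 A).
Local Notation s3 := (s3 F k l t P num alpha enc B w0 A).
Local Notation rec3 := (rec3 F k l t P num alpha enc B w0 A).
Local Notation notif2 := (notif2 F k l t P num alpha enc B w0 A).
Local Notation freq := (freq F k l t P num alpha enc B w0 A).
Local Notation fix4 := (fix4 F k l t P num alpha enc B w0 A).
Local Notation recv4 := (recv4 F k l t P num alpha enc B w0 A).
Local Notation z4 := (z4 F k l t P num alpha enc B w0 A).
Local Notation decode4 := (decode4 F k l t P num alpha enc B w0 A).
Local Notation vote := (vote F k l t P num alpha enc B w0 A).
Local Notation core_out := (core_out F k l t P num alpha enc B w0 A d).
Local Notation ba_ok := (ba_ok F k l t P num alpha enc B w0 A).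
Local Notation notif3 := (notif3 F k l t P num alpha enc B w0 A).

Hypothesis hm : 3 * t + 1 <= #|P|.
Hypothesis hB : #|B| <= t.
Hypothesis hag : forall x y : msg l, x != y -> #|[set p | ev p x == ev p y]| <= t %/ 5.

Lemma u1_link {i j} : i \notin B -> j \notin B -> u1 i j ->
  ev j (w0 j) = ev j (w0 i) /\ ev i (w0 i) = ev i (w0 j).
Proof.
move=> hi hj; rewrite /Defs.u1 /Defs.recv1 (negbTE hj) /Defs.yv.
case/orP => [/eqP -> //| /eqP [e1 e2]]; by split.
Qed.

Lemma u1_same i j : j \notin B -> w0 i = w0 j -> u1 i j.
Proof.
move=> hj e; rewrite /Defs.u1 /Defs.recv1 (negbTE hj) /Defs.yv e.
by apply/orP; right.
Qed.

Lemma s2_s1 {i} : s2 i -> s1 i.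
Proof. by rewrite /Defs.s2 => /andP []. Qed.
Lemma s3_s2 {i} : s3 i -> s2 i.
Proof. by rewrite /Defs.s3 => /andP []. Qed.

Lemma rec1_h i j : j \notin B -> rec1 i j = s1 j.
Proof.
move=> hj; rewrite /Defs.rec1 (negbTE hj); by case: eqP => [->|].
Qed.

Lemma rec2_h i j : j \notin B -> rec2 i j = s2 j.
Proof.
move=> hj; rewrite /Defs.rec2 /Defs.notif2 (negbTE hj) -/(rec1 i j) rec1_h //.
case: eqP => [->//|_]. by case E: (s2 j); [rewrite (s2_s1 E) | case: (s1 j)].
Qed.

Lemma rec3_h i j : j \notin B -> rec3 i j = s3 j.
Proof.
move=> hj; rewrite /Defs.rec3 /Defs.notif3 (negbTE hj) -/(rec2 i j) rec2_h //.
case: eqP => [->//|_]. by case E: (s3 j); [rewrite (s3_s2 E) | case: (s2 j)].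
Qed.

Lemma honest_part (p : pred P) : #|[set j | p j]| <= #|[set j | (j \notin B) && p j]| + #|B|.
Proof.
apply: leq_trans (leq_of_leqif (leq_card_setU [set j | (j \notin B) && p j] B)).
apply: subset_leq_card; apply/subsetP => j; rewrite !inE => pj.
by case: (j \in B); rewrite ?orbT ?pj.
Qed.

Definition Y (x : msg l) : {set P} := [set p | (p \notin B) && (ev p (w0 p) == ev p x)].

Lemma Y_inter {x y} : x != y -> #|Y x :&: Y y| <= t %/ 5.
Proof.
move=> nxy; apply: leq_trans (hag _ _ nxy).
apply: subset_leq_card; apply/subsetP => p.
by rewrite !inE => /andP [/andP [_ /eqP <-] /andP [_ /eqP <-]].
Qed.

Lemma s1_Y {i} : i \notin B -> s1 i -> #|P| - t - #|B| <= #|Y (w0 i)|.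
Proof.
move=> hi; rewrite /Defs.s1 => h1.
have h2 := honest_part (fun j => u1 i j).
have h3 : #|[set j | (j \notin B) && u1 i j]| <= #|Y (w0 i)|.
  apply: subset_leq_card; apply/subsetP => j; rewrite !inE => /andP [hj uj].
  have [-> _] := u1_link hi hj uj; by rewrite hj eqxx.
have : #|[set j | u1 i j]| = #|[set j | u1 i j]| by [].
lia.
Qed.


Lemma card_honest : #|~: B| = #|P| - #|B|.
Proof. by rewrite [LHS]cardsCs setCK. Qed.

Lemma Y_honest x : Y x \subset ~: B.
Proof. by apply/subsetP => p; rewrite !inE => /andP []. Qed.

Lemma three i1 i2 i3 : i1 \notin B -> i2 \notin B -> i3 \notin B ->
  s1 i1 -> s1 i2 -> s1 i3 -> w0 i1 != w0 i2 -> w0 i1 != w0 i3 -> w0 i2 != w0 i3 -> False.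
Proof.
move=> h1 h2 h3 s1' s2' s3' n12 n13 n23.
have c1 := s1_Y h1 s1'; have c2 := s1_Y h2 s2'; have c3 := s1_Y h3 s3'.
have e12 := Y_inter n12; have e13 := Y_inter n13; have e23 := Y_inter n23.
set Y1 := Y (w0 i1) in c1 e12 e13 *; set Y2 := Y (w0 i2) in c2 e12 e23 *;
set Y3 := Y (w0 i3) in c3 e13 e23 *.
have u12 := cardsUI Y1 Y2.
have u3 := cardsUI (Y1 :|: Y2) Y3.
have ii3 : #|(Y1 :|: Y2) :&: Y3| <= #|Y1 :&: Y3| + #|Y2 :&: Y3|.
  by rewrite setIUl; apply: leq_of_leqif (leq_card_setU _ _).
have sub : #|(Y1 :|: Y2) :|: Y3| <= #|~: B|.
  by apply: subset_leq_card; rewrite !subUset !Y_honest.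
rewrite card_honest in sub.
have : t %/ 5 * 5 <= t by apply: leq_trunc_div.
lia.
Qed.

Definition G (x : msg l) : {set P} := [set p | (p \notin B) && (w0 p == x)].

Lemma G_Y x : G x \subset Y x.
Proof. by apply/subsetP => p; rewrite !inE => /andP [-> /eqP ->] /=. Qed.

Lemma big_group {i j} : i \notin B -> j \notin B -> s3 i -> s1 j -> w0 j != w0 i ->
  #|P| - t - #|B| <= #|G (w0 i)|.
Proof.
move=> hi hj si sj nji.
have V : forall p, p \notin B -> s1 p -> w0 p = w0 i \/ w0 p = w0 j.
  move=> p hp sp; case: (eqVneq (w0 p) (w0 i)) => [->|npi]; first by left.
  case: (eqVneq (w0 p) (w0 j)) => [->|npj]; first by right.
  exfalso; apply: (three _ _ _ hi hj hp (s2_s1 (s3_s2 si)) sj sp); by rewrite eq_sym.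
set a := w0 i in V nji *; set b := w0 j in V nji *.
have hN3 : #|P| - t - #|B| <= #|[set q | (q \notin B) && u3 i q]|.
  move: si; rewrite /Defs.s3 => /andP [_ h]. have h2 := honest_part (fun q => u3 i q).
  lia.
set G2 := G a :&: [set q | s2 q].
have sub3 : [set q | (q \notin B) && u3 i q] \subset G2 :|: (Y a :&: Y b).
  apply/subsetP => q; rewrite !inE => /andP [hq].
  rewrite /Defs.u3 /Defs.u2 -/(rec1 i q) -/(rec2 i q) rec2_h // => /andP [/andP [uq _] sq].
  have [e1 _] := u1_link hi hq uq.
  case: (V q hq (s2_s1 sq)) => eq.
    by rewrite hq eq eqxx sq.
  by rewrite eq in e1; rewrite hq eq e1 !eqxx orbT.
have c3 := subset_leq_card sub3.
have c3' := leq_of_leqif (leq_card_setU G2 (Y a :&: Y b)).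
have eab := Y_inter (negbT (introF eqP (fun e => (elimF eqP (negbTE nji)) (esym e)))).
have hID := cardsID (Y b) G2.
have sub4 : G2 :&: Y b \subset Y a :&: Y b.
  by apply: setSI; apply: subset_trans (G_Y a); apply: subsetIl.
have c4 := subset_leq_card sub4.
have : t %/ 5 * 5 <= t by apply: leq_trunc_div.
move=> h5.
have : 0 < #|G2 :\: Y b| by lia.
case/card_gt0P => p; rewrite !inE => /andP [npY /andP [/andP [hp /eqP wp] sp]].
have hN2 : #|P| - t - #|B| <= #|[set q | (q \notin B) && u2 p q]|.
  move: sp; rewrite /Defs.s2 => /andP [_ h]. have h2 := honest_part (fun q => u2 p q).
  lia.
apply: leq_trans hN2 _; apply: subset_leq_card; apply/subsetP => q.
rewrite !inE => /andP [hq]; rewrite /Defs.u2 -/(rec1 p q) rec1_h // => /andP [uq sq].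
rewrite hq /=; case: (V q hq sq) => eq; first by rewrite eq.
have [_ e2] := u1_link hp hq uq.
move: npY; rewrite hp /= e2 eq eqxx.
by [].
Qed.

Lemma main_cons i j : i \notin B -> j \notin B -> s3 i -> s3 j -> w0 i = w0 j.
Proof.
move=> hi hj si sj; apply/eqP; apply/negPn/negP => nij.
have ga := big_group hi hj si (s2_s1 (s3_s2 sj)) (negbT (introF eqP (fun e => (elimF eqP (negbTE nij)) (esym e)))).
have gb := big_group hj hi sj (s2_s1 (s3_s2 si)) nij.
have u := cardsUI (G (w0 i)) (G (w0 j)).
have sub : G (w0 i) :|: G (w0 j) \subset ~: B.
  by rewrite subUset; apply/andP; split; apply/subsetP => p; rewrite !inE => /andP [].
have i0 : G (w0 i) :&: G (w0 j) = set0.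
  apply/setP => p; rewrite !inE; apply/negP => /andP [/andP [_ /eqP e1] /andP [_ /eqP e2]].
  by move/eqP: nij; apply; rewrite -e1 -e2.
rewrite i0 cards0 in u.
have := subset_leq_card sub; rewrite card_honest.
lia.
Qed.

Lemma fix4_val i ws : i \notin B -> ~~ s3 i ->
  (forall j, j \notin B -> s3 j -> w0 j = ws) ->
  #|B| < #|[set j | (j \notin B) && s3 j]| -> fix4 i = ev i ws.
Proof.
move=> hi ni hS hcard.
have hgood : #|[set j | (j \notin B) && s3 j]| <= freq i (ev i ws).
  apply: subset_leq_card; apply/subsetP => j; rewrite !inE => /andP [hj sj].
  rewrite -/(rec3 i j) rec3_h // sj /= /Defs.recv1 (negbTE hj) /Defs.yv /=.
  by rewrite (hS j hj sj).
have hbad : forall v, v != ev i ws -> freq i v <= #|B|.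
  move=> v nv; apply: subset_leq_card; apply/subsetP => j; rewrite !inE.
  case: (boolP (j \in B)) => // hj.
  rewrite -/(rec3 i j) rec3_h // /Defs.recv1 (negbTE hj) /Defs.yv /=.
  case/andP => sj /eqP ev'. by move: nv; rewrite -ev' (hS j hj sj) eqxx.
rewrite /Defs.fix4; case: pickP => [v /forallP hv | hnone] /=.
  apply/eqP; apply/negPn/negP => nv.
  have := hv (ev i ws); have := hbad v nv. rewrite -/(freq i v) -/(freq i (ev i ws)).
  lia.
exfalso.
case: (arg_maxnP (freq i) (erefl true : (predT (0%R : F)))) => v _ hmax.
move: (hnone v) => /negP; apply; apply/forallP => v'; exact: hmax.
Qed.

Lemma decode_val i ws : i \notin B -> ~~ s3 i ->
  (forall j, j \notin B -> s3 j -> w0 j = ws) ->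
  (forall j, j \notin B -> ~~ s3 j -> fix4 j = ev j ws) ->
  decode4 i = Some ws.
Proof.
move=> hi ni hS hF.
have hz : forall j, j \notin B -> z4 i j = ev j ws.
  move=> j hj; rewrite /Defs.z4; case: eqP => [->|_]; first exact: hF.
  rewrite -/(rec3 i j) rec3_h //; case: (boolP (s3 j)) => sj.
    by rewrite /Defs.recv1 (negbTE hj) /Defs.yv /= (hS j hj sj).
  by rewrite /Defs.recv4 (negbTE hj) hF.
have honest_sub : forall x, ~: B \subset [set j | ev j x == z4 i j] -> x = ws -> True by [].
rewrite /Defs.decode4; case: pickP => [x hx | hnone].
  congr Some; apply/eqP; apply/negPn/negP => nx.
  have h1 := hag _ _ nx.
  have h2 := honest_part (fun j => ev j x == z4 i j).
  have h3 : #|[set j | (j \notin B) && (ev j x == z4 i j)]| <= #|[set p | ev p x == ev p ws]|.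
    apply: subset_leq_card; apply/subsetP => j; rewrite !inE => /andP [hj].
    by rewrite hz.
  have : t %/ 5 * 5 <= t by apply: leq_trunc_div.
  move: hx; rewrite -/(z4 i).
  lia.
exfalso; move: (hnone ws) => /negP; apply.
have : #|~: B| <= #|[set j | ev j ws == z4 i j]|.
  apply: subset_leq_card; apply/subsetP => j; rewrite !inE => hj. by rewrite hz.
rewrite card_honest. lia.
Qed.

Lemma core_common : ba_ok d -> exists o, forall i, i \notin B -> core_out i = o.
Proof.
move=> hba; rewrite /Defs.core_out.
case hd: d; last by exists None.
case: (boolP [exists i, (i \notin B) && vote i]) => [/existsP [i0 /andP [h0 v0]] | hno]; last first.
  have : d = false.
    apply: hba => i hi; apply/negP => vi; move/negP: hno; apply.
    by apply/existsP; exists i; rewrite hi vi.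
  by rewrite hd.
have hS : #|B| < #|[set j | (j \notin B) && s3 j]|.
  move: v0; rewrite /Defs.vote -/(rec3 i0) => v0.
  have h2 := honest_part (fun j => rec3 i0 j).
  have e : [set j | (j \notin B) && rec3 i0 j] = [set j | (j \notin B) && s3 j].
    apply/setP => j; rewrite !inE; case: (boolP (j \in B)) => //= hj; exact: rec3_h.
  have v1 : 2 * t + 1 <= #|[set j | rec3 i0 j]| := v0. rewrite e in h2. lia.
have : 0 < #|[set j | (j \notin B) && s3 j]| by lia.
case/card_gt0P => j0; rewrite inE => /andP [hj0 sj0].
have hws : forall j, j \notin B -> s3 j -> w0 j = w0 j0.
  move=> j hj sj; exact: main_cons.
have hF : forall j, j \notin B -> ~~ s3 j -> fix4 j = ev j (w0 j0).
  move=> j hj nj; exact: fix4_val.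
exists (Some (w0 j0)) => i hi.
case: (boolP (s3 i)) => si; first by rewrite (hws i hi si).
exact: decode_val.
Qed.

Lemma core_valid (M : msg l) : (forall i, i \notin B -> w0 i = M) -> ba_ok d ->
  forall i, i \notin B -> core_out i = Some M.
Proof.
move=> hM hba.
have hc : #|P| - t <= #|~: B| by rewrite card_honest; lia.
have hs1 : forall i, i \notin B -> s1 i.
  move=> i hi; rewrite /Defs.s1; apply: leq_trans hc _; apply: subset_leq_card.
  apply/subsetP => j; rewrite !inE => hj; apply: u1_same => //; by rewrite !hM.
have hs2 : forall i, i \notin B -> s2 i.
  move=> i hi; rewrite /Defs.s2 -/(s1 i) hs1 //=; apply: leq_trans hc _; apply: subset_leq_card.
  apply/subsetP => j; rewrite !inE => hj; rewrite /Defs.u2 -/(rec1 i j) rec1_h // hs1 // andbT.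
  apply: u1_same => //; by rewrite !hM.
have hs3 : forall i, i \notin B -> s3 i.
  move=> i hi; rewrite /Defs.s3 -/(s2 i) hs2 //=; apply: leq_trans hc _; apply: subset_leq_card.
  apply/subsetP => j; rewrite !inE => hj; rewrite /Defs.u3 /Defs.u2 -/(rec1 i j) -/(rec2 i j).
  rewrite rec1_h // rec2_h // hs1 // hs2 // !andbT.
  apply: u1_same => //; by rewrite !hM.
have hd : d = true.
  apply: hba => i hi; rewrite /Defs.vote; apply: (@leq_trans #|~: B|).
    rewrite card_honest; lia.
  apply: subset_leq_card; apply/subsetP => j; rewrite !inE => hj.
  by rewrite -/(rec3 i j) rec3_h // hs3.
move=> i hi; by rewrite /Defs.core_out hd -/(s3 i) hs3 // hM.
Qed.

End CoreProof.

Module AgreeMod.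
Import GRing.Theory.

Section Agree.
Variables (F : finFieldType) (k l : nat) (P : finType) (num : P -> nat)
  (alpha : nat -> F) (enc : msg l -> 'rV[F]_k) (m' : nat).
Hypothesis halpha : {in [pred i : nat | i < m'] &, injective alpha}.
Hypothesis hnum : forall p, num p < m'.
Hypothesis hnuminj : injective num.
Hypothesis hk : k <= m'.
Hypothesis henc : injective enc.

Local Open Scope ring_scope.

Definition lagc (j : 'I_k) : F := \prod_(p < k | p != j) (alpha j - alpha p)^-1.
Definition lagp (j : 'I_k) : {poly F} := \prod_(p < k | p != j) ('X - (alpha p)%:P).
Definition lag (j : 'I_k) : {poly F} := lagc j *: lagp j.

Lemma hcoef_lag (i : nat) j : hcoef F k alpha i j = (lag j).[alpha i].
Proof.
rewrite /hcoef /lag /lagc /lagp hornerZ horner_prod.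
rewrite (eq_bigr (fun p : 'I_k => (alpha i - alpha p) * (alpha j - alpha p)^-1)) //.
rewrite big_split /= mulrC; congr (_ * _); apply: eq_bigr => p _.
by rewrite hornerXsubC.
Qed.

Lemma size_lag j : (size (lag j) <= k)%N.
Proof.
apply: leq_trans (size_scale_leq _ _) _.
rewrite /lagp size_prod; last by move=> p _; rewrite polyXsubC_eq0.
rewrite (eq_bigr (fun _ => 2%N)); last by move=> p _; rewrite size_XsubC.
rewrite sum_nat_const.
have : #|[pred p : 'I_k | p != j]| = k.-1 by rewrite cardC1 card_ord.
move=> ->. 
have : (0 < k)%N by case: j => /= j' hj'; lia.
move=> hk0. lia.
Qed.

Lemma hcoef_node (j' j : 'I_k) : hcoef F k alpha j' j = (j == j')%:R.
Proof.
rewrite /hcoef; case: eqP => [<-|nj].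
  apply: big1 => p pj; rewrite divff // subr_eq0; apply/eqP => e.
  move/eqP: pj; apply; apply: val_inj; apply: halpha => //; rewrite inE.
  - exact: (leq_trans (ltn_ord _) hk).
  - exact: (leq_trans (ltn_ord _) hk).
rewrite (bigD1 j') /=; last by apply/eqP => e; apply: nj.
by rewrite subrr mul0r mul0r.
Qed.

Lemma agree_card (x y : msg l) : x != y ->
  (#|[set p | ev F k l P num alpha enc p x == ev F k l P num alpha enc p y]| <= k.-1)%N.
Proof.
move=> nxy.
set R := \sum_(j < k) (enc x 0 j - enc y 0 j) *: lag j.
have hR : forall i : nat, R.[alpha i] = \sum_(j < k) hcoef F k alpha i j * (enc x 0 j - enc y 0 j).
  move=> i; rewrite /R horner_sum; apply: eq_bigr => j _.
  by rewrite hornerZ hcoef_lag mulrC.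
have hRp : forall p, R.[alpha (num p)] = ev F k l P num alpha enc p x - ev F k l P num alpha enc p y.
  move=> p; rewrite hR /ev -sumrB; apply: eq_bigr => j _; by rewrite mulrBr.
have sR : (size R <= k)%N.
  apply: leq_trans (size_sum _ _ _) _.
  apply/bigmax_leqP => j _; apply: leq_trans (size_scale_leq _ _) _; exact: size_lag.
have R0 : R != 0.
  apply/eqP => R0; move/negP: nxy; apply; apply/eqP; apply: henc.
  apply/rowP => j.
  have := hR j; rewrite R0 horner0 (bigD1 j) //= hcoef_node eqxx mul1r big1.
    by rewrite addr0 => /esym/eqP; rewrite subr_eq0 => /eqP.
  by move=> p pj; rewrite hcoef_node (negbTE pj) mul0r.
set S := [set p | _].
set rs := [seq alpha (num p) | p <- enum S].
have hroots : all (root R) rs.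
  apply/allP => z /mapP [p]; rewrite mem_enum inE => /eqP e ->.
  by rewrite /root hRp e subrr.
have huniq : uniq rs.
  rewrite map_inj_in_uniq ?enum_uniq // => p q _ _ e.
  apply: hnuminj; apply: halpha => //; rewrite inE; exact: hnum.
have := max_poly_roots R0 hroots huniq.
rewrite size_map -cardE => h.
have hk' := leq_trans h sR; by rewrite -ltnS (ltn_predK hk').
Qed.

End Agree.

End AgreeMod.
Import AgreeMod.


Lemma sum_le_const (T : finType) (p : pred T) (f : T -> nat) b :
  (forall i, f i <= b) -> \sum_(i | p i) f i <= #|T| * b.
Proof.
move=> hf; rewrite big_mkcond /=.
apply: leq_trans (_ : \sum_(i : T) b <= _).
  by apply: leq_sum => i _; case: (p i) => //.
by rewrite sum_nat_const cardT -cardE.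
Qed.

Lemma kpar_ge t : t.+1 <= 5 * kpar t.
Proof. rewrite /kpar; have := ltn_pmod t (isT : 0 < 5); have := divn_eq t 5; lia. Qed.

Lemma cval_le m t l Lx : m.+1 <= 2 ^ Lx -> cval m t l <= l %/ kpar t + 1 + 5 * Lx.
Proof.
move=> hL.
set c0 := l %/ kpar t + 1 + 5 * Lx.
set pr := (fun c => (l <= kpar t * c) && ((m.+1) ^ (t + 5) <= 2 ^ (5 * kpar t * c))).
have hk := kpar_ge t.
have hpc : pr c0.
  apply/andP; split.
    have := divn_eq l (kpar t); have := ltn_pmod l (_ : 0 < kpar t).
    rewrite /c0; move: (l %/ kpar t) (l %% kpar t) => q r.
    move=> h1 h2. have : 0 < kpar t by lia. move=> h3. move: (h1 h3) => h4. nia.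
  apply: leq_trans (_ : (2 ^ Lx) ^ (t + 5) <= _).
    by rewrite leq_exp2r ?addn_gt0 ?orbT.
  rewrite -expnM; apply: leq_pexp2l => //. rewrite /c0. nia.
rewrite /cval -/pr.
set N := (l + (t + 5) * m.+1).+1.
case: (ltnP c0 N) => hc.
  case: (ltnP c0 (find pr (iota 0 N))) => // hf.
  have := before_find 0 hf; rewrite nth_iota // add0n => e.
  by rewrite e in hpc.
apply: leq_trans (find_size _ _) _; by rewrite size_iota.
Qed.

Definition K1 (C : nat) := 103 + 17 * C + 5 * C * C.

Lemma arith1 C n t l q tl k c : 1 <= l -> n <= C * t -> t.+1 <= 5 * k -> q * k <= l ->
  c <= q + 1 + 5 * (C + tl + 1) -> (t <= 1 -> tl = 0) -> (2 <= t -> 1 <= tl) ->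
  n * (c + 1) <= K1 C * (l + t * tl).
Proof.
move=> hl hn hk hq hc h0 h1.
have e1 : n * (c + 1) <= n * q + n * (7 + 5 * C + 5 * tl).
  rewrite -mulnDr; apply: leq_mul => //; lia.
have e2 : t * q <= 5 * l.
  apply: (@leq_trans (5 * k * q)); first by apply: leq_mul => //; lia.
  rewrite -mulnA; apply: leq_mul => //; by rewrite mulnC.
have e3 : n * q <= 5 * C * l.
  apply: (@leq_trans (C * t * q)); first by apply: leq_mul.
  rewrite -mulnA; apply: leq_trans (leq_mul (leqnn C) e2) _; lia.
have e4 : n * (7 + 5 * C + 5 * tl) <= C * t * (7 + 5 * C + 5 * tl) by apply: leq_mul.
case: (leqP t 1) => ht.
  have := h0 ht => htl; rewrite htl in e4.
  have e5 : C * t * (7 + 5 * C + 5 * 0) <= C * (7 + 5 * C) * l.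
    have := leq_mul (leq_mul (leqnn C) ht) (leqnn (7 + 5 * C)).
    have := leq_mul (leqnn (C * (7 + 5 * C))) hl.
    rewrite muln0 addn0 !muln1. lia.
  rewrite /K1; nia.
have htl := h1 ht.
have e5 : C * t * (7 + 5 * C + 5 * tl) <= C * (12 + 5 * C) * (t * tl).
  rewrite -!mulnA; apply: leq_mul => //.
  rewrite [X in _ <= X]mulnA (mulnC (12 + 5 * C) t) -mulnA; apply: leq_mul => //.
  nia.
rewrite /K1; nia.
Qed.

Lemma arith2 t l q tl k c : 1 <= l -> t.+1 <= 5 * k -> q * k <= l ->
  c <= q + 1 + 5 * (tl + 3) -> (t <= 1 -> tl = 0) -> (2 <= t -> 1 <= tl) ->
  forall C, (3 * t + 1) * (c + 1) <= K1 C * (l + t * tl).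
Proof.
move=> hl hk hq hc h0 h1 C.
have e1 : (3 * t + 1) * (c + 1) <= (3 * t + 1) * q + (3 * t + 1) * (17 + 5 * tl).
  rewrite -mulnDr; apply: leq_mul => //; lia.
have e2 : (3 * t + 1) * q <= 15 * l.
  apply: (@leq_trans (15 * k * q)); first by apply: leq_mul => //; lia.
  rewrite -mulnA; apply: leq_mul => //; by rewrite mulnC.
case: (leqP t 1) => ht.
  have := h0 ht => htl; rewrite htl in e1.
  have e5 : (3 * t + 1) * (17 + 5 * 0) <= 68 * l by nia.
  rewrite /K1; nia.
have htl := h1 ht.
have e5 : (3 * t + 1) * (17 + 5 * tl) <= 88 * (t * tl) by nia.
rewrite /K1; nia.
Qed.

Lemma core_bits_le (F : finFieldType) (k l t : nat) (P : finType) (num : P -> nat)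
  (alpha : nat -> F) (enc : msg l -> 'rV[F]_k) (B : {set P}) (w0 : P -> msg l)
  (A : CoreAdv F P) (d : bool) (c bab : nat) :
  core_bits F k l t P num alpha enc B w0 A d c bab <= #|P| * (#|P| * (3 * (c + 1))) + bab.
Proof.
rewrite /core_bits; apply: leq_add => //; apply: sum_le_const => i.
set S := [set j | _ & _].
have hS : #|S| <= #|P| by apply: max_card.
case: (s1 _ _ _ _ _ _ _ _ _ _ _ _ && _); case: (s2 _ _ _ _ _ _ _ _ _ _ _ _ && _);
  case: (d && _); nia.
Qed.

Lemma sumQ_le n t (B : {set 'I_n}) c :
  3 * t + 1 <= n ->
  \sum_(q in Qt n t | val q \notin B) (c + 1) * (n - (3 * t + 1)) <= (3 * t + 1) * ((c + 1) * n).
Proof.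
move=> h; apply: leq_trans (sum_le_const _ _ _ ((c + 1) * n) _) _.
  by move=> q; apply: leq_mul => //; apply: leq_subr.
have : #|Qt n t| = 3 * t + 1.
  rewrite card_sig.
  have -> : #|[pred x : 'I_n | x < 3 * t + 1]| = #|[set widen_ord h j | j : 'I_(3 * t + 1)]|.
    apply: eq_card => x; rewrite !inE; apply/idP/imsetP => [hx | [j _ ->]].
      by exists (Ordinal hx) => //; apply: val_inj.
    by rewrite /= ltn_ord.
  rewrite card_imset ?card_ord //. move=> a b /(congr1 val) /= e; exact: val_inj.
by move=> ->.
Qed.


Lemma hp_gen (T : finType) (S : {set T}) (p : pred T) :
  #|[set j | p j]| <= #|[set j | (j \notin S) && p j]| + #|S|.
Proof.
apply: leq_trans (leq_of_leqif (leq_card_setU [set j | (j \notin S) && p j] S)).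
apply: subset_leq_card; apply/subsetP => j; rewrite !inE => pj.
by case: (j \in S); rewrite ?orbT ?pj.
Qed.

Lemma card_Qt n t : 3 * t + 1 <= n -> #|Qt n t| = 3 * t + 1.
Proof.
move=> h; rewrite card_sig.
have -> : #|[pred x : 'I_n | x < 3 * t + 1]| = #|[set widen_ord h j | j : 'I_(3 * t + 1)]|.
  apply: eq_card => x; rewrite !inE; apply/idP/imsetP => [hx | [j _ ->]].
    by exists (Ordinal hx) => //; apply: val_inj.
  by rewrite /= ltn_ord.
rewrite card_imset ?card_ord //; move=> a b /(congr1 val) /= e; exact: val_inj.
Qed.

Lemma card_BQ n t (B : {set 'I_n}) : #|BQ n t B| <= #|B|.
Proof.
rewrite -(card_imset _ val_inj); apply: subset_leq_card; apply/subsetP => x /imsetP [q].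
by rewrite inE => hq ->.
Qed.

Lemma kpar_pred t : (kpar t).-1 = t %/ 5.
Proof. by rewrite /kpar addn1. Qed.

Section Outsider.
Variables (n t l C : nat) (L : 'I_n) (M : msg l) (B : {set 'I_n})
  (F : finFieldType) (alpha : nat -> F) (enc : msg l -> 'rV[F]_(kpar t))
  (adv : CoolAdv F n t l) (d : bool).
Hypothesis hn : 3 * t + 1 <= n.
Hypothesis hB : #|B| <= t.
Local Notation evQ := (ev F (kpar t) l (Qt n t) (numQ n t) alpha enc).
Hypothesis hag : forall x y : msg l, x != y -> #|[set p | evQ p x == evQ p y]| <= t %/ 5.

Lemma outsider_ok o i :
  (forall q : Qt n t, val q \notin B -> coreQ_out n t l L M B F alpha enc adv d q = o) ->
  outsider_out n t l L M B F alpha enc adv d i = o.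
Proof.
move=> ho; rewrite /outsider_out /= card_Qt //.
have hBQ := card_BQ n t B.
have hon : forall (p : pred (Qt n t)), (forall q, val q \notin B -> p q) -> 3 * t + 1 - #|B| <= #|[set q | p q]|.
  move=> p hpq.
  have : #|~: BQ n t B| <= #|[set q | p q]|.
    apply: subset_leq_card; apply/subsetP => q; rewrite !inE => hq; exact: hpq.
  rewrite [#|~: _|]cardsCs setCK card_Qt //. lia.
have hv : forall q : Qt n t, \val q \notin B -> (sval q \in B) = false.
  by move=> q /negbTE.
have hcB : #|~: BQ n t B| = 3 * t + 1 - #|BQ n t B| by rewrite [#|~: _|]cardsCs setCK card_Qt.
case: o ho => [xs|] ho.
  case: pickP => [x hx | hnone].
    congr Some; apply/eqP; apply/negPn/negP => nx.
    have h1 := hag _ _ nx.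
    move: hx; set S := (X in _ <= #|X|) => hx.
    have sub : S \subset [set p | evQ p x == evQ p xs] :|: BQ n t B.
      apply/subsetP => q; rewrite /S !inE.
      case: (boolP (\val q \in B)) => hq; first by rewrite orbT.
      by rewrite ho // => /eqP [<-]; rewrite eqxx.
    have := leq_trans hx (leq_trans (subset_leq_card sub) (leq_trans (leq_of_leqif (leq_card_setU _ _)) (leq_add h1 (leq_trans hBQ hB)))).
    have : t %/ 5 * 5 <= t by apply: leq_trunc_div.
    lia.
  exfalso; move: (hnone xs) => /negP; apply.
  set S := (X in _ <= #|X|).
  have sub : ~: BQ n t B \subset S.
    apply/subsetP => q; rewrite /S !inE => hq.
    by rewrite (hv q hq) ho.
  apply: leq_trans (subset_leq_card sub); rewrite hcB; lia.
case: pickP => [x hx | //].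
exfalso.
move: hx; set S := (X in _ <= #|X|) => hx.
have sub : S \subset BQ n t B.
  apply/subsetP => q; rewrite /S !inE.
  case: (boolP (\val q \in B)) => hq //.
  by rewrite ho.
have := leq_trans hx (leq_trans (subset_leq_card sub) (leq_trans hBQ hB)).
lia.
Qed.
End Outsider.

Lemma cool_correct (C n t l : nat) (L : 'I_n) (M : msg l) (B : {set 'I_n})
  (F : finFieldType) (alpha : nat -> F) (enc : msg l -> 'rV[F]_(kpar t))
  (adv : CoolAdv F n t l) (d : bool) :
  3 * t + 1 <= n -> #|B| <= t ->
  {in [pred i : nat | i < cool_m n t C] &, injective alpha} -> injective enc ->
  cool_ba_ok n t l C L M B F alpha enc adv d ->
  exists o, (forall i, i \notin B -> cool_out n t l C L M B F alpha enc adv d i = o)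
            /\ (L \notin B -> o = Some M).
Proof.
move=> hn hB hal henc hba.
have hkp : kpar t <= 3 * t + 1 by rewrite /kpar; have := leq_div t 5; lia.
rewrite /cool_out; move: hba hal; rewrite /cool_ba_ok /cool_m; case: ifP => hC hba hal.
  have hag := agree_card F (kpar t) l 'I_n (fun i : 'I_n => nat_of_ord i) alpha enc n hal
     (fun p => ltn_ord p) (@ord_inj n) (leq_trans hkp hn) henc.
  rewrite kpar_pred in hag.
  have hm : 3 * t + 1 <= #|'I_n| by rewrite card_ord.
  have [o ho] := core_common _ _ _ _ _ _ _ _ _ _ _ _ hm hB hag hba.
  exists o; split => // hL.
  rewrite -(ho L hL); apply: (core_valid _ _ _ _ _ _ _ _ _ _ _ _ hm hB) => // i hi.
  by rewrite /w0 (negbTE hL).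
have hag := agree_card F (kpar t) l (Qt n t) (numQ n t) alpha enc (3 * t + 1) hal
     (fun q => valP q) (fun a b e => val_inj (val_inj e)) hkp henc.
rewrite kpar_pred in hag.
have hm : 3 * t + 1 <= #|Qt n t| by rewrite card_Qt.
have hBQ : #|BQ n t B| <= t by apply: leq_trans (card_BQ n t B) hB.
have [o ho] := core_common _ _ _ _ _ _ _ _ _ _ _ _ hm hBQ hag hba.
have ho' : forall q : Qt n t, val q \notin B -> coreQ_out n t l L M B F alpha enc adv d q = o.
  by move=> q hq; apply: ho; rewrite inE.
exists o; split.
  move=> i hi; case: insubP => [q hq eqi | hq].
    by apply: ho'; rewrite eqi.
  exact: outsider_ok.
move=> hL.
have : 0 < #|~: BQ n t B| by rewrite [#|~: _|]cardsCs setCK card_Qt //; lia.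
case/card_gt0P => q0; rewrite !inE => hq0.
rewrite -(ho' q0 hq0); apply: (core_valid _ _ _ _ _ _ _ _ _ _ _ _ hm hBQ) => //; last by rewrite inE.
by move=> q _; rewrite /w0Q /w0 (negbTE hL).
Qed.


Theorem theorem2 (C Kb : nat) (baRounds baBits : nat -> nat -> nat)
  (hR : forall m t : nat, (baRounds m t <= Kb * t.+1)%N)
  (hB : forall m t : nat, (baBits m t <= Kb * m * t.+1)%N) :
  exists K : nat,
  forall (n t l : nat), (1 <= n)%N -> (1 <= l)%N -> (3 * t + 1 <= n)%N ->
  forall (L : 'I_n) (M : msg l) (B : {set 'I_n}), (#|B| <= t)%N ->
  forall (F : finFieldType) (alpha : nat -> F) (enc : msg l -> 'rV[F]_(kpar t)),
    #|F| = (2 ^ cool_c n t l C)%N ->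
    {in [pred i : nat | (i < cool_m n t C)%N] &, injective alpha} ->
    (forall i : nat, (i < cool_m n t C)%N -> alpha i != 0%R) ->
    injective enc ->
  forall (adv : CoolAdv F n t l) (d : bool),
    cool_ba_ok n t l C L M B F alpha enc adv d ->
    (* consistency *)
    (forall i j : 'I_n, i \notin B -> j \notin B ->
       cool_out n t l C L M B F alpha enc adv d i = cool_out n t l C L M B F alpha enc adv d j) /\
    (* validity *)
    (L \notin B -> forall i : 'I_n, i \notin B ->
       cool_out n t l C L M B F alpha enc adv d i = Some M) /\
    (* O(t) rounds *)
    (cool_rounds n t C baRounds <= K * t.+1)%N /\
    (* O(max{n l, n t log t}) bits *)
    (cool_bits n t l C L M B F alpha enc adv d baBits <= K * maxn (n * l) (n * t * trunc_log 2 t))%N.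
Proof.
exists (7 + Kb + 2 * (1 + 4 * K1 C + 2 * Kb)).
move=> n t l hn1 hl hn L M B hBt F alpha enc hF hal hal0 henc adv d hba.
have [o [ho hv]] := cool_correct C n t l L M B F alpha enc adv d hn hBt hal henc hba.
split; first by move=> i j hi hj; rewrite !ho.
split; first by move=> hL i hi; rewrite ho // hv.
split.
  rewrite /cool_rounds; case: ifP => _.
    have := hR n t; lia.
  have := hR (3 * t + 1) t; lia.
set tl := trunc_log 2 t.
have htl : t < 2 ^ tl.+1 := trunc_log_ltn t (isT : 1 < 2).
have h0 : t <= 1 -> tl = 0.
  move=> ht; rewrite /tl; have : (t == 0) || (t == 1) by lia.
  by case/orP => /eqP ->; [exact: trunc_log0 | exact: trunc_log1].
have h1 : 2 <= t -> 1 <= tl.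
  move=> ht; apply: trunc_log_max => //.
have hk := kpar_ge t.
have hq : l %/ kpar t * kpar t <= l := leq_trunc_div l (kpar t).
set X := maxn (n * l) (n * t * tl).
have hY : n * l + n * t * tl <= 2 * X by rewrite /X; lia.
have hnt : n * t.+1 <= 2 * (n * l + n * t * tl).
  case: (leqP t 1) => ht.
    have := leq_mul (leqnn n) hl; have := leq_mul (leqnn n) ht; lia.
  have := h1 ht => htl1.
  have := leq_mul (leqnn (n * t)) htl1; have := leq_mul (leqnn n) (ltnW ht); lia.
have hlead : (if L \in B then 0 else l * (n - 1)) <= n * l.
  case: (L \in B) => //; rewrite mulnC; apply: leq_mul => //; apply: leq_subr.
have f1 := leq_mul (leqnn Kb) hnt.
have f2 := leq_mul (leqnn (1 + 4 * K1 C + 2 * Kb)) hY.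
rewrite /cool_bits; case: (boolP (n <= C * t)) => hC.
  have hC' : n <= C * t by [].
  set c := cool_c n t l C.
  have hpow : n.+1 <= 2 ^ (C + tl + 1).
    rewrite -addnA addn1 expnD.
    have hCa := ltn_expl C (isT : 1 < 2).
    have := leq_mul hCa htl. lia.
  have hc : c <= l %/ kpar t + 1 + 5 * (C + tl + 1).
    by rewrite /c /cool_c /cool_m hC; apply: cval_le.
  have hm := arith1 C n t l (l %/ kpar t) tl (kpar t) c hl hC' hk hq hc h0 h1.
  have hcb := core_bits_le F (kpar t) l t 'I_n (fun i : 'I_n => nat_of_ord i) alpha enc B
     (w0 n t l L M B F adv) (advN adv) d c (baBits n t).
  rewrite card_ord in hcb.
  have hb := hB n t.
  have e1 := leq_mul (leqnn (3 * n)) hm.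
  move: hlead hcb hb e1 f1 f2.
  move: (core_bits _ _ _ _ _ _ _ _ _ _ _ _ _ _) => cb.
  move: (if L \in B then 0 else l * (n - 1)) => ld.
  move: (baBits n t) => bb. move: (K1 C) => k1.
  lia.
set c := cool_c n t l C.
have hpow : (3 * t + 1).+1 <= 2 ^ (tl + 3).
  move: htl; rewrite addn3 !expnS. lia.
have hc : c <= l %/ kpar t + 1 + 5 * (tl + 3).
  by rewrite /c /cool_c /cool_m (negbTE hC); apply: cval_le.
have hm := arith2 t l (l %/ kpar t) tl (kpar t) c hl hk hq hc h0 h1 C.
have hcb := core_bits_le F (kpar t) l t (Qt n t) (numQ n t) alpha enc (BQ n t B)
     (w0Q n t l L M B F adv) (advQ adv) d c (baBits (3 * t + 1) t).
rewrite card_Qt // in hcb.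
have hb := hB (3 * t + 1) t.
have hs := sumQ_le n t B c hn.
have e1 := leq_mul (leq_mul (leqnn 3) hn) hm.
have e2 := leq_mul (leqnn n) hm.
have e3 : Kb * (3 * t + 1) * t.+1 <= Kb * (n * t.+1).
  rewrite -mulnA; apply: leq_mul => //; apply: leq_mul => //.
move: hlead hcb hb e1 e2 e3 hs f1 f2.
move: (core_bits _ _ _ _ _ _ _ _ _ _ _ _ _ _) => cb.
move: (\sum_(q in Qt n t | _) _) => sq.
move: (if L \in B then 0 else l * (n - 1)) => ld.
move: (baBits (3 * t + 1) t) => bb. move: (K1 C) => k1.
lia.
Qed.
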